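(* Let $S$ be a semigroup, let $T$ be a subsemigroup of $S$ generated by a finite set $A$, and let $s\in S$. If $\langle T,s\rangle\setminus T$ is finite, then the poset of ends $\Omega\Gamma_r(T,A)$ is isomorphic, as a partially ordered set, to $\Omega\Gamma_r(\langle T,s\rangle, A\cup\{s\})$.
   Context: $\langle T,s\rangle$ is the subsemigroup of $S$ generated by $T\cup\{s\}$. A digraph on a set $\Omega$ is a subset $\Gamma\subseteq\Omega\times\Omega$. A path is a finite or infinite sequence of pairwise distinct vertices $(v_0,v_1,\ldots)$ with $(v_i,v_{i+1})\in\Gamma$ for all $i$ (a single vertex is a path of length 0); a ray is an infinite path; an anti-ray is an infinite sequence of pairwise distinct vertices with $(v_{i+1},v_i)\in\Gamma$ for all $i$. For infinite $\Sigma',\Sigma\subseteq\Omega$, write $\Sigma'\preccurlyeq\Sigma$ if there are infinitely many pairwise vertex-disjoint paths each with initial vertex in $\Sigma'$ and final vertex in $\Sigma$. Restricted to the set of rays and anti-rays of $\Gamma$ (identified with their vertex sets), $\preccurlyeq$ is a preorder; let $\approx$ be the associated equivalence ($\mathbf{r}\approx\mathbf{r}'$ iff $\mathbf{r}\preccurlyeq\mathbf{r}'$ and $\mathbf{r}'\preccurlyeq\mathbf{r}$). The ends of $\Gamma$ are the $\approx$-classes of rays and anti-rays, and $\Omega\Gamma$ is the set of ends with the partial order induced by $\preccurlyeq$. For a semigroup $S$ generated by $A$, the right Cayley graph $\Gamma_r(S,A)$ is the digraph on $S$ with edges $(x,xa)$ for all $x\in S$, $a\in A$. *)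

(* Defs.v *)
From Stdlib Require Import List Classical.
Import ListNotations.
Set Implicit Arguments.

Inductive gen (S : Type) (op : S -> S -> S) (X : S -> Prop) : S -> Prop :=
| gen_base : forall x, X x -> gen op X x
| gen_op : forall x y, gen op X x -> gen op X y -> gen op X (op x y).

Definition finite_set (S : Type) (P : S -> Prop) : Prop :=
  exists l : list S, forall x, P x -> In x l.

Record digraph (S : Type) := Digraph { vert : S -> Prop; edge : S -> S -> Prop }.

Definition cayley_r (S : Type) (op : S -> S -> S) (T A : S -> Prop) : digraph S :=
  Digraph T (fun x y => T x /\ exists a, A a /\ y = op x a).

Fixpoint chain (S : Type) (E : S -> S -> Prop) (p : list S) : Prop :=
  match p with
  | x :: ((y :: _) as q) => E x y /\ chain E q
  | _ => True
  end.

Definition is_path (S : Type) (G : digraph S) (p : list S) : Prop :=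
  p <> [] /\ NoDup p /\ Forall (vert G) p /\ chain (edge G) p.

Definition is_ray (S : Type) (G : digraph S) (r : nat -> S) : Prop :=
  (forall i, vert G (r i)) /\ (forall i j, r i = r j -> i = j) /\
  (forall i, edge G (r i) (r (Datatypes.S i))).

Definition is_antiray (S : Type) (G : digraph S) (r : nat -> S) : Prop :=
  (forall i, vert G (r i)) /\ (forall i j, r i = r j -> i = j) /\
  (forall i, edge G (r (Datatypes.S i)) (r i)).

Definition ray_or_antiray (S : Type) (G : digraph S) (r : nat -> S) : Prop :=
  is_ray G r \/ is_antiray G r.

Definition vset (S : Type) (r : nat -> S) : S -> Prop := fun x => exists i, r i = x.

Definition reach_le (S : Type) (G : digraph S) (X Y : S -> Prop) : Prop :=
  exists P : nat -> list S,
    (forall i, is_path G (P i) /\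
       (exists x, hd_error (P i) = Some x /\ X x) /\
       (exists y, hd_error (rev (P i)) = Some y /\ Y y)) /\
    (forall i j, i <> j -> forall v, In v (P i) -> ~ In v (P j)).

Definition end_equiv (S : Type) (G : digraph S) (r r' : nat -> S) : Prop :=
  reach_le G (vset r) (vset r') /\ reach_le G (vset r') (vset r).

Definition Ends (S : Type) (G : digraph S) : Type :=
  { C : (nat -> S) -> Prop |
    exists r, ray_or_antiray G r /\
      forall r', C r' <-> (ray_or_antiray G r' /\ end_equiv G r r') }.

Definition end_le (S : Type) (G : digraph S) (C D : Ends G) : Prop :=
  exists r r', proj1_sig C r /\ proj1_sig D r' /\ reach_le G (vset r) (vset r').

Definition ends_iso (S1 S2 : Type) (G1 : digraph S1) (G2 : digraph S2) : Prop :=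
  exists f : Ends G1 -> Ends G2,
    (forall C D, f C = f D -> C = D) /\
    (forall D, exists C, f C = D) /\
    (forall C D, @end_le S1 G1 C D <-> @end_le S2 G2 (f C) (f D)).

(* Main.v *)
Require Import Defs.
From Stdlib Require Import List Arith Lia Classical ClassicalEpsilon FunctionalExtensionality PropExtensionality ProofIrrelevance.
Import ListNotations.
Set Implicit Arguments.


Section Walks.
Variable S : Type.
Variable G : digraph S.

Definition walk (x : S) (l : list S) (y : S) :=
  chain (edge G) (x :: l) /\ Forall (vert G) (x :: l) /\ last (x :: l) x = y.

Lemma last_cons2 : forall (l : list S) x y d, last (x :: y :: l) d = last (y :: l) d.
Proof. reflexivity. Qed.

Lemma last_indep : forall (l : list S) x d d', last (x :: l) d = last (x :: l) d'.
Proof.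
  induction l as [|a l IH]; intros x d d'. reflexivity.
  rewrite !last_cons2. apply IH.
Qed.

Lemma walk_nil : forall x, vert G x -> walk x [] x.
Proof. intros x H. split; [simpl; auto| split; [constructor; auto|reflexivity]]. Qed.

Lemma walk_cons : forall x y l z, edge G x y -> vert G x -> walk y l z -> walk x (y :: l) z.
Proof.
  intros x y l z He Hv [Hc [Hf Hl]]. split; [|split].
  - simpl. split; auto.
  - constructor; auto.
  - rewrite last_cons2. rewrite <- Hl. apply last_indep.
Qed.

Lemma walk_inv : forall x y l z, walk x (y :: l) z -> edge G x y /\ vert G x /\ walk y l z.
Proof.
  intros x y l z [Hc [Hf Hl]]. simpl in Hc. destruct Hc as [He Hc].
  inversion Hf; subst. repeat split; auto.
  rewrite last_cons2. apply last_indep.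
Qed.

Lemma walk_vert_end : forall x l y, walk x l y -> vert G y.
Proof.
  intros x l. revert x. induction l as [|a l IH]; intros x y H.
  - destruct H as [_ [Hf Hl]]. simpl in Hl. subst. inversion Hf; auto.
  - apply walk_inv in H. destruct H as [_ [_ H]]. eauto.
Qed.

Lemma walk_vert_start : forall x l y, walk x l y -> vert G x.
Proof. intros x l y [_ [Hf _]]. inversion Hf; auto. Qed.

Lemma walk_app : forall x l y l' z, walk x l y -> walk y l' z -> walk x (l ++ l') z.
Proof.
  intros x l. revert x. induction l as [|a l IH]; intros x y l' z H1 H2.
  - destruct H1 as [_ [_ Hl]]. simpl in Hl. subst. simpl. auto.
  - apply walk_inv in H1. destruct H1 as [He [Hv Hw]].
    simpl. apply walk_cons; auto. eapply IH; eauto.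
Qed.

Lemma walk_snoc : forall x l y z, walk x l y -> edge G y z -> vert G z -> walk x (l ++ [z]) z.
Proof.
  intros. eapply walk_app; eauto. apply walk_cons; auto.
  eapply walk_vert_end; eauto. apply walk_nil; auto.
Qed.

Lemma walk_vert : forall x l y v, walk x l y -> In v (x :: l) -> vert G v.
Proof. intros x l y v [_ [Hf _]] Hi. rewrite Forall_forall in Hf. auto. Qed.

Lemma chain_tail : forall (E : S -> S -> Prop) a l, chain E (a :: l) -> chain E l.
Proof. intros E a l H. destruct l; simpl in *; tauto. Qed.

Lemma chain_suffix : forall (E : S -> S -> Prop) pre l, chain E (pre ++ l) -> chain E l.
Proof.
  intros E pre; induction pre as [|a pre IH]; intros l H; simpl in *; auto.
  apply IH. eapply chain_tail; eauto.
Qed.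

Lemma last_suffix : forall pre x (post : list S) d, last (pre ++ x :: post) d = last (x :: post) x.
Proof.
  induction pre as [|a pre IH]; intros x post d; simpl.
  - apply last_indep.
  - destruct (pre ++ x :: post) eqn:E. { destruct pre; discriminate. }
    rewrite <- E. apply IH.
Qed.

Lemma hd_rev_last : forall (l : list S) x, hd_error (rev (x :: l)) = Some (last (x :: l) x).
Proof.
  induction l as [|a l IH] using rev_ind; intros x. reflexivity.
  rewrite app_comm_cons, rev_app_distr, last_last. reflexivity.
Qed.

Lemma last_in : forall (l : list S) x d, In (last (x :: l) d) (x :: l).
Proof.
  induction l as [|a l IH]; intros x d. simpl; auto.
  rewrite last_cons2. right. apply IH.
Qed.

Lemma hd_rev_some : forall (l : list S) x z d, hd_error (rev (x :: l)) = Some z -> last (x :: l) d = z.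
Proof.
  intros l x z d H. rewrite hd_rev_last in H. inversion H. apply last_indep.
Qed.

Lemma walk_last : forall x l y, walk x l y -> forall d, last (x :: l) d = y.
Proof. intros x l y [_ [_ H]] d. rewrite <- H. apply last_indep. Qed.

Lemma walk_to_path : forall l x y, walk x l y ->
  exists l', is_path G (x :: l') /\ last (x :: l') x = y /\ incl (x :: l') (x :: l).
Proof.
  induction l as [|a l IH]; intros x y H.
  - exists []. destruct H as [Hc [Hf Hl]]. split; [|split].
    + split; [discriminate|split; [constructor; [simpl; auto|constructor]|split; auto]].
    + exact Hl.
    + apply incl_refl.
  - apply walk_inv in H. destruct H as [He [Hv Hw]].
    destruct (IH a y Hw) as [l1 [Hp [Hl Hi]]].
    destruct (classic (In x (a :: l1))) as [Hin|Hnin].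
    + apply in_split in Hin. destruct Hin as [pre [post Heq]].
      exists post. destruct Hp as [_ [Hnd [Hf Hc]]]. rewrite Heq in *.
      split; [|split].
      * split; [discriminate|split;[|split]].
        -- apply NoDup_app_remove_l in Hnd. auto.
        -- apply Forall_app in Hf. tauto.
        -- eapply chain_suffix; eauto.
      * rewrite <- Hl. symmetry. apply last_suffix.
      * intros v Hv'. right. apply Hi. apply in_or_app. right. auto.
    + exists (a :: l1). destruct Hp as [_ [Hnd [Hf Hc]]]. split; [|split].
      * split; [discriminate|split;[|split]].
        -- constructor; auto.
        -- constructor; auto.
        -- simpl. split; auto.
      * rewrite last_cons2. rewrite <- Hl. apply last_indep.
      * intros v [Hv'|Hv']; [left; auto|right]. apply Hi; auto.
Qed.

End Walks.


Section Sel.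
Variable V : Type.
Variable W : nat -> list V.
Variable b : V -> nat.
Hypothesis Hb : forall v n, In v (W n) -> n < b v.

Fixpoint sumb (U : list V) : nat := match U with [] => 0 | v :: U' => b v + sumb U' end.

Lemma sumb_le : forall U v, In v U -> b v <= sumb U.
Proof. induction U; simpl; intros v H; [tauto|]. destruct H; subst; [lia|]. specialize (IHU v H); lia. Qed.

Fixpoint acc (n : nat) : nat * list V :=
  match n with
  | 0 => (0, W 0)
  | S n' => let p := acc n' in
            let j := S (fst p + sumb (snd p)) in (j, snd p ++ W j)
  end.

Lemma acc_incl : forall n m, m <= n -> incl (W (fst (acc m))) (snd (acc n)).
Proof.
  induction n; intros m Hm.
  - assert (m = 0) by lia. subst. simpl. apply incl_refl.
  - destruct (Nat.eq_dec m (S n)).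
    + subst. simpl. apply incl_appr, incl_refl.
    + simpl. apply incl_appl. apply IHn. lia.
Qed.

Lemma select : exists sg : nat -> nat, forall i j, i <> j -> forall v, In v (W (sg i)) -> ~ In v (W (sg j)).
Proof.
  exists (fun n => fst (acc n)).
  assert (K : forall i j, i < j -> forall v, In v (W (fst (acc i))) -> ~ In v (W (fst (acc j)))).
  { intros i j Hij v H1 H2. destruct j as [|j]; [lia|].
    assert (H3 : In v (snd (acc j))) by (apply (@acc_incl j i); [lia|auto]).
    apply sumb_le in H3. apply Hb in H2. simpl in H2. lia. }
  intros i j Hij v H1 H2. destruct (Nat.lt_ge_cases i j).
  - eapply K; eauto.
  - eapply (K j i); eauto. lia.
Qed.
End Sel.

Section Reach.
Variable V : Type.
Variable G : digraph V.

Lemma family_reach : forall (X Y : V -> Prop) (x y : nat -> V) (l : nat -> list V),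
  (forall n, walk G (x n) (l n) (y n) /\ X (x n) /\ Y (y n)) ->
  (forall v, exists B, forall n, In v (x n :: l n) -> n < B) ->
  reach_le G X Y.
Proof.
  intros X Y x y l Hw Hm.
  set (b := fun v => proj1_sig (constructive_indefinite_description _ (Hm v))).
  assert (Hb : forall v n, In v (x n :: l n) -> n < b v).
  { intros v n. unfold b. destruct (constructive_indefinite_description _ (Hm v)). simpl. auto. }
  destruct (select (fun n => x n :: l n) b Hb) as [sg Hsg].
  assert (Hp : forall n, exists l', is_path G (x n :: l') /\ last (x n :: l') (x n) = y n /\
                                 incl (x n :: l') (x n :: l n)).
  { intros n. apply walk_to_path. apply Hw. }
  set (P := fun n => x (sg n) :: proj1_sig (constructive_indefinite_description _ (Hp (sg n)))).
  exists P. split.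
  - intros i. unfold P. destruct (constructive_indefinite_description _ (Hp (sg i))) as [l' [H1 [H2 H3]]].
    cbn [proj1_sig]. split; auto. split.
    + exists (x (sg i)). split; auto. apply Hw.
    + exists (y (sg i)). split. rewrite hd_rev_last. congruence. apply Hw.
  - intros i j Hij v H1 H2. unfold P in *.
    destruct (constructive_indefinite_description _ (Hp (sg i))) as [l1 [J1 [J2 I1]]].
    destruct (constructive_indefinite_description _ (Hp (sg j))) as [l2 [J3 [J4 I2]]].
    cbn [proj1_sig] in *. eapply Hsg; [exact Hij| apply I1; exact H1 | apply I2; exact H2].
Qed.

Lemma reach_refl_inj : forall (X Y : V -> Prop) (r : nat -> V),
  (forall i j, r i = r j -> i = j) -> (forall n, vert G (r n) /\ X (r n) /\ Y (r n)) ->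
  reach_le G X Y.
Proof.
  intros X Y r Hi Hr. apply (family_reach X Y r r (fun _ => [])).
  - intros n. split; [apply walk_nil; apply Hr|split; apply Hr].
  - intros v. destruct (classic (exists n, r n = v)) as [[n Hn]|Hn].
    + exists (S n). intros m [Hm|[]]. rewrite <- Hn in Hm. apply Hi in Hm. lia.
    + exists 0. intros m [Hm|[]]. exfalso; eauto.
Qed.

Lemma disj_bound : forall (P : nat -> list V),
  (forall i j, i <> j -> forall v, In v (P i) -> ~ In v (P j)) ->
  forall v, exists B, forall i, In v (P i) -> i < B.
Proof.
  intros P HP v. destruct (classic (exists i, In v (P i))) as [[i Hi]|Hn].
  - exists (S i). intros j Hj. destruct (Nat.eq_dec i j). lia. exfalso; eapply HP; eauto.
  - exists 0. intros j Hj. exfalso; eauto.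
Qed.

Lemma inj_bound : forall (r : nat -> V), (forall i j, r i = r j -> i = j) ->
  forall v, exists B, forall i, r i = v -> i < B.
Proof.
  intros r Hr v. destruct (classic (exists i, r i = v)) as [[i Hi]|Hn].
  - exists (S i). intros j Hj. assert (i = j) by (apply Hr; congruence). lia.
  - exists 0. intros j Hj. exfalso; eauto.
Qed.

Lemma inj_list_bound : forall (r : nat -> V), (forall i j, r i = r j -> i = j) ->
  forall L : list V, exists B, forall i, In (r i) L -> i < B.
Proof.
  intros r Hr L. induction L as [|a L IH].
  - exists 0. intros i [].
  - destruct IH as [B1 HB1]. destruct (inj_bound r Hr a) as [B2 HB2].
    exists (B1 + B2). intros i [H|H]. symmetry in H; apply HB2 in H; lia. apply HB1 in H; lia.
Qed.

Lemma far_index : forall (e y : nat -> V),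
  (forall i j, e i = e j -> i = j) -> (forall i j, y i = y j -> i = j) ->
  (forall i, exists k, e i = y k) ->
  forall n B, exists i k, n <= i /\ B <= k /\ e i = y k.
Proof.
  intros e y He Hy Hey n B. apply NNPP. intro Hn.
  assert (Hinc : incl (map e (seq n (S B))) (map y (seq 0 B))).
  { intros v Hv. apply in_map_iff in Hv. destruct Hv as [i [Hi Hs]]. apply in_seq in Hs.
    destruct (Hey i) as [k Hk]. apply in_map_iff. exists k. split; [congruence|].
    apply in_seq. split; [lia|]. destruct (Nat.lt_ge_cases k B) as [H|H]; [lia|].
    exfalso. apply Hn. exists i, k. repeat split; auto; lia. }
  apply NoDup_incl_length in Hinc.
  - rewrite !length_map, !length_seq in Hinc. lia.
  - apply NoDup_map_NoDup_ForallPairs. intros a c _ _; apply He. apply seq_NoDup.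
Qed.

End Reach.


Section Trans.
Variable V : Type.
Variable G : digraph V.

Lemma family_reach2 : forall (X Y : V -> Prop) (M : V -> nat -> Prop),
  (forall v, exists B, forall n, M v n -> n < B) ->
  (forall n, exists x l z, walk G x l z /\ X x /\ Y z /\ forall v, In v (x :: l) -> M v n) ->
  reach_le G X Y.
Proof.
  intros X Y M HM H.
  assert (H' : forall n, { p : V * list V * V | walk G (fst (fst p)) (snd (fst p)) (snd p) /\
     X (fst (fst p)) /\ Y (snd p) /\ forall v, In v (fst (fst p) :: snd (fst p)) -> M v n }).
  { intros n. apply constructive_indefinite_description.
    destruct (H n) as [x [l [z Hz]]]. exists (x, l, z). exact Hz. }
  apply (family_reach X Y (fun n => fst (fst (proj1_sig (H' n)))) (fun n => snd (proj1_sig (H' n)))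
         (fun n => snd (fst (proj1_sig (H' n))))).
  - intros n. destruct (H' n) as [p Hp]. simpl. tauto.
  - intros v. destruct (HM v) as [B HB]. exists B. intros n Hn.
    destruct (H' n) as [p Hp]. simpl in Hn. apply HB. apply Hp. exact Hn.
Qed.

Lemma path_walk : forall p x z, is_path G p -> hd_error p = Some x -> hd_error (rev p) = Some z ->
  exists l, p = x :: l /\ walk G x l z.
Proof.
  intros p x z [Hne [Hnd [Hf Hc]]] Hx Hz. destruct p as [|a l]; [congruence|].
  simpl in Hx. inversion Hx; subst. exists l. split; auto.
  split; auto. split; auto. rewrite hd_rev_last in Hz. congruence.
Qed.

Variable y : nat -> V.
Hypothesis Hy : ray_or_antiray G y.

Lemma roa_inj : forall i j, y i = y j -> i = j.
Proof. destruct Hy as [[_ [H _]]|[_ [H _]]]; auto. Qed.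

Lemma roa_vert : forall i, vert G (y i).
Proof. destruct Hy as [[H _]|[H _]]; auto. Qed.

Fixpoint useg (m d : nat) : list V :=
  match d with 0 => [] | S d' => y (S m) :: useg (S m) d' end.

Fixpoint dseg (m d : nat) : list V :=
  match d with 0 => [] | S d' => y (m + d') :: dseg m d' end.

Lemma useg_walk : is_ray G y -> forall d m, walk G (y m) (useg m d) (y (m + d)).
Proof.
  intros [Hv [_ He]]. induction d; intros m; simpl.
  - rewrite Nat.add_0_r. apply walk_nil; auto.
  - apply walk_cons; auto. replace (m + S d) with (S m + d) by lia. apply IHd.
Qed.

Lemma useg_in : forall d m v, In v (useg m d) -> exists t, m < t /\ y t = v.
Proof.
  induction d; intros m v H; simpl in H; [tauto|]. destruct H as [H|H].
  - exists (S m); split; auto.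
  - destruct (IHd _ _ H) as [t [Ht Ht']]. exists t; split; auto; lia.
Qed.

Lemma dseg_walk : is_antiray G y -> forall d m, walk G (y (m + d)) (dseg m d) (y m).
Proof.
  intros [Hv [_ He]]. induction d; intros m; simpl.
  - rewrite Nat.add_0_r. apply walk_nil; auto.
  - apply walk_cons; auto. replace (m + S d) with (S (m + d)) by lia. apply He.
Qed.

Lemma dseg_in : forall d m v, In v (dseg m d) -> exists t, m <= t /\ y t = v.
Proof.
  induction d; intros m v H; simpl in H; [tauto|]. destruct H as [H|H].
  - exists (m + d); split; auto; lia.
  - destruct (IHd _ _ H) as [t [Ht Ht']]. exists t; split; auto; lia.
Qed.

Lemma reach_trans : forall X Z, reach_le G X (vset y) -> reach_le G (vset y) Z -> reach_le G X Z.
Proof.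
  intros X Z [P [HP HPd]] [Q [HQ HQd]].
  set (d0 := y 0).
  set (e := fun i => last (P i) d0).
  set (st := fun j => hd d0 (Q j)).
  assert (HPw : forall i, exists l, P i = hd d0 (P i) :: l /\ walk G (hd d0 (P i)) l (e i)
                  /\ X (hd d0 (P i)) /\ vset y (e i)).
  { intros i. destruct (HP i) as [Hp [[x [Hx1 Hx2]] [z [Hz1 Hz2]]]].
    destruct (path_walk Hp Hx1 Hz1) as [l [Hl Hw]]. exists l.
    unfold e. rewrite Hl in *. cbn [hd].
    rewrite (walk_last Hw). split; [reflexivity|]. split; [exact Hw|]. split; auto. }
  assert (HQw : forall j, exists l z, Q j = st j :: l /\ walk G (st j) l z /\ vset y (st j) /\ Z z).
  { intros j. destruct (HQ j) as [Hp [[x [Hx1 Hx2]] [z [Hz1 Hz2]]]].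
    destruct (path_walk Hp Hx1 Hz1) as [l [Hl Hw]]. exists l, z. unfold st. rewrite Hl in *.
    cbn [hd] in *. inversion Hx1; subst. split; [reflexivity|]. split; [exact Hw|]. split; auto. }
  assert (He_inj : forall i j, e i = e j -> i = j).
  { intros i j Hij. destruct (Nat.eq_dec i j); auto. exfalso.
    destruct (HPw i) as [l1 [E1 _]]. destruct (HPw j) as [l2 [E2 _]].
    apply (HPd i j n (e i)).
    - unfold e. rewrite E1. apply last_in.
    - rewrite Hij. unfold e. rewrite E2. apply last_in. }
  assert (Hst_inj : forall i j, st i = st j -> i = j).
  { intros i j Hij. destruct (Nat.eq_dec i j); auto. exfalso.
    destruct (HQw i) as [l1 [z1 [E1 _]]]. destruct (HQw j) as [l2 [z2 [E2 _]]].
    apply (HQd i j n (st i)).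
    - rewrite E1. left; auto.
    - rewrite Hij. rewrite E2. left; auto. }
  assert (He_y : forall i, exists k, e i = y k).
  { intros i. destruct (HPw i) as [l [_ [_ [_ [k Hk]]]]]. exists k; auto. }
  assert (Hst_y : forall i, exists k, st i = y k).
  { intros i. destruct (HQw i) as [l [z [_ [_ [[k Hk] _]]]]]. exists k; auto. }
  pose proof (far_index e y He_inj roa_inj He_y) as Fe.
  pose proof (far_index st y Hst_inj roa_inj Hst_y) as Fs.
  set (M := fun v n => (exists i, n <= i /\ In v (P i)) \/ (exists t, n <= t /\ y t = v) \/
                       (exists j, n <= j /\ In v (Q j))).
  apply (family_reach2 X Z M).
  { intros v. destruct (disj_bound P HPd v) as [B1 H1]. destruct (disj_bound Q HQd v) as [B2 H2].
    destruct (inj_bound y roa_inj v) as [B3 H3]. exists (B1 + B2 + B3).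
    intros n [[i [Hi Hv]]|[[t [Ht Hv]]|[j [Hj Hv]]]].
    - apply H1 in Hv; lia.
    - apply H3 in Hv; lia.
    - apply H2 in Hv; lia. }
  intros n. destruct Hy as [Hr|Ha].
  - destruct (Fe n n) as [i [k [Hi [Hk Eik]]]].
    destruct (Fs n k) as [j [k' [Hj [Hk' Ejk]]]].
    destruct (HPw i) as [l1 [E1 [W1 [X1 _]]]].
    destruct (HQw j) as [l2 [z [E2 [W2 [_ Z2]]]]].
    exists (hd d0 (P i)), (l1 ++ useg k (k' - k) ++ l2), z. split; [|split; [auto|split; [auto|]]].
    + eapply walk_app. rewrite Eik in W1. exact W1.
      eapply walk_app. apply useg_walk; auto. replace (k + (k' - k)) with k' by lia.
      rewrite Ejk in W2. exact W2.
    + intros v Hv. unfold M. destruct Hv as [Hv|Hv].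
      * left. exists i. split; auto. rewrite E1. left; auto.
      * apply in_app_or in Hv. destruct Hv as [Hv|Hv].
        { left. exists i. split; auto. rewrite E1. right; auto. }
        apply in_app_or in Hv. destruct Hv as [Hv|Hv].
        { right; left. apply useg_in in Hv. destruct Hv as [t [Ht Hv]]. exists t. split; auto; lia. }
        right; right. exists j. split; auto. rewrite E2. right; auto.
  - destruct (Fs n n) as [j [k' [Hj [Hk' Ejk]]]].
    destruct (Fe n k') as [i [k [Hi [Hk Eik]]]].
    destruct (HPw i) as [l1 [E1 [W1 [X1 _]]]].
    destruct (HQw j) as [l2 [z [E2 [W2 [_ Z2]]]]].
    exists (hd d0 (P i)), (l1 ++ dseg k' (k - k') ++ l2), z. split; [|split; [auto|split; [auto|]]].
    + eapply walk_app. rewrite Eik in W1. exact W1.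
      eapply walk_app. replace k with (k' + (k - k')) at 1 by lia. apply dseg_walk; auto.
      rewrite Ejk in W2. exact W2.
    + intros v Hv. unfold M. destruct Hv as [Hv|Hv].
      * left. exists i. split; auto. rewrite E1. left; auto.
      * apply in_app_or in Hv. destruct Hv as [Hv|Hv].
        { left. exists i. split; auto. rewrite E1. right; auto. }
        apply in_app_or in Hv. destruct Hv as [Hv|Hv].
        { right; left. apply dseg_in in Hv. destruct Hv as [t [Ht Hv]]. exists t. split; auto; lia. }
        right; right. exists j. split; auto. rewrite E2. right; auto.
Qed.
End Trans.


Section Assemble.
Variable V : Type.

Lemma ends_eq : forall (G : digraph V) (C D : Ends G), (forall r, proj1_sig C r <-> proj1_sig D r) -> C = D.
Proof.
  intros G [c Hc] [d Hd] H. simpl in H.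
  assert (c = d). { apply functional_extensionality. intros r. apply propositional_extensionality. auto. }
  subst. f_equal. apply proof_irrelevance.
Qed.

Lemma equiv_refl : forall (G : digraph V) r, ray_or_antiray G r -> end_equiv G r r.
Proof.
  intros G r Hr. assert (H : reach_le G (vset r) (vset r)).
  { apply (reach_refl_inj G (vset r) (vset r) r (roa_inj Hr)). intros n. split; [apply (roa_vert Hr)|].
    split; exists n; auto. }
  split; auto.
Qed.

Lemma equiv_sym : forall (G : digraph V) r r', end_equiv G r r' -> end_equiv G r' r.
Proof. intros G r r' [H1 H2]; split; auto. Qed.

Lemma equiv_trans : forall (G : digraph V) r1 r2 r3, ray_or_antiray G r2 ->
  end_equiv G r1 r2 -> end_equiv G r2 r3 -> end_equiv G r1 r3.
Proof.
  intros G r1 r2 r3 H2 [A1 B1] [A2 B2]. split; eapply reach_trans; eauto.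
Qed.

Variables G1 G2 : digraph V.
Hypothesis Hv : forall x, vert G1 x -> vert G2 x.
Hypothesis He : forall x y, edge G1 x y -> edge G2 x y.

Lemma chain_mono : forall (E1 E2 : V -> V -> Prop) l, (forall x y, E1 x y -> E2 x y) -> chain E1 l -> chain E2 l.
Proof.
  intros E1 E2 l HE. induction l as [|a l IH]; simpl; auto.
  destruct l; auto. intros [H1 H2]. split; auto.
Qed.

Lemma path_mono : forall p, is_path G1 p -> is_path G2 p.
Proof.
  intros p [H1 [H2 [H3 H4]]]. split; auto. split; auto. split.
  - eapply Forall_impl; [|exact H3]. auto.
  - eapply chain_mono; [|exact H4]. auto.
Qed.

Lemma reach_mono : forall X Y, reach_le G1 X Y -> reach_le G2 X Y.
Proof.
  intros X Y [P [H1 H2]]. exists P. split; auto. intros i. destruct (H1 i) as [A B]. split; auto.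
  apply path_mono; auto.
Qed.

Lemma roa_mono : forall r, ray_or_antiray G1 r -> ray_or_antiray G2 r.
Proof.
  intros r [[A [B C]]|[A [B C]]]; [left|right]; repeat split; auto.
Qed.

Lemma equiv_mono : forall r r', end_equiv G1 r r' -> end_equiv G2 r r'.
Proof. intros r r' [A B]; split; apply reach_mono; auto. Qed.

Hypothesis H3 : forall r r', ray_or_antiray G1 r -> ray_or_antiray G1 r' ->
  reach_le G2 (vset r) (vset r') -> reach_le G1 (vset r) (vset r').
Hypothesis H4 : forall q, ray_or_antiray G2 q -> exists r, ray_or_antiray G1 r /\ end_equiv G2 r q.

Lemma equiv_back : forall r r', ray_or_antiray G1 r -> ray_or_antiray G1 r' ->
  end_equiv G2 r r' -> end_equiv G1 r r'.
Proof. intros r r' A B [C D]. split; apply H3; auto. Qed.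

Definition rep (C : Ends G1) : nat -> V := proj1_sig (constructive_indefinite_description _ (proj2_sig C)).

Lemma rep_spec : forall C, ray_or_antiray G1 (rep C) /\
   forall r', proj1_sig C r' <-> (ray_or_antiray G1 r' /\ end_equiv G1 (rep C) r').
Proof. intros C. unfold rep. destruct (constructive_indefinite_description _ (proj2_sig C)). simpl. auto. Qed.

Definition fmap (C : Ends G1) : Ends G2.
Proof.
  exists (fun q => ray_or_antiray G2 q /\ end_equiv G2 (rep C) q).
  exists (rep C). split. apply roa_mono, rep_spec. intros; tauto.
Defined.

Lemma assemble : ends_iso G1 G2.
Proof.
  exists fmap. split; [|split].
  - intros C D Hf. apply ends_eq. intros r.
    destruct (rep_spec C) as [RC HC]. destruct (rep_spec D) as [RD HD].
    assert (Hin : proj1_sig (fmap C) (rep C)).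
    { simpl. split. apply roa_mono; auto. apply equiv_refl. apply roa_mono; auto. }
    rewrite Hf in Hin. simpl in Hin. destruct Hin as [_ Hdc].
    apply equiv_back in Hdc; auto.
    rewrite HC, HD. split; intros [Hr Heq]; split; auto.
    + eapply equiv_trans; [exact RC| exact Hdc| exact Heq].
    + eapply equiv_trans; [exact RD| apply equiv_sym; exact Hdc| exact Heq].
  - intros D. destruct (proj2_sig D) as [q [Hq HD]].
    destruct (H4 Hq) as [r [Hr Heq]].
    set (Cc := fun r' => ray_or_antiray G1 r' /\ end_equiv G1 r r').
    assert (HC : exists r0, ray_or_antiray G1 r0 /\ forall r', Cc r' <->
               (ray_or_antiray G1 r' /\ end_equiv G1 r0 r')).
    { exists r. split; auto. unfold Cc. tauto. }
    set (C0 := exist _ Cc HC : Ends G1).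
    exists C0. apply ends_eq. intros q'.
    destruct (rep_spec C0) as [R0 H0].
    set (r0 := rep C0) in *.
    assert (E0 : end_equiv G2 r r0).
    { apply equiv_mono. apply H0. simpl. unfold Cc. split; auto. apply equiv_refl; auto. }
    assert (R0' : ray_or_antiray G2 r0) by (apply roa_mono; auto).
    assert (Hr' : ray_or_antiray G2 r) by (apply roa_mono; auto).
    unfold fmap. cbn [proj1_sig]. fold r0. rewrite HD. split; intros [Hq' Hqq]; split; auto.
    + apply (equiv_trans Hr' (equiv_sym Heq)). apply (equiv_trans R0' E0 Hqq).
    + apply (equiv_trans Hr' (equiv_sym E0)). apply (equiv_trans Hq Heq Hqq).
  - intros C D. destruct (rep_spec C) as [RC HC]. destruct (rep_spec D) as [RD HD]. split.
    + intros [r [r' [Hr [Hr' Hle]]]]. apply HC in Hr. apply HD in Hr'.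
      exists r, r'. simpl. split; [|split].
      * split; [apply roa_mono; tauto|apply equiv_mono; tauto].
      * split; [apply roa_mono; tauto|apply equiv_mono; tauto].
      * apply reach_mono; auto.
    + intros [q [q' [[Hq Eq] [[Hq' Eq'] Hle]]]].
      exists (rep C), (rep D). split; [|split].
      * apply HC. split; auto. apply equiv_refl; auto.
      * apply HD. split; auto. apply equiv_refl; auto.
      * apply H3; auto. destruct Eq as [Eq1 Eq2]. destruct Eq' as [Eq1' Eq2'].
        eapply reach_trans; [exact Hq| exact Eq1|].
        eapply reach_trans; [exact Hq'| exact Hle| exact Eq2'].
Qed.
End Assemble.


Section Count.
Variable V : Type.

Definition decb (P : Prop) : bool := if excluded_middle_informative P then true else false.

Lemma decb_true : forall P, decb P = true <-> P.
Proof. intros P; unfold decb; destruct (excluded_middle_informative P); split; intros; auto; discriminate. Qed.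

Lemma count_split : forall (P1 P2 : V -> Prop) a b,
  (forall l, NoDup l -> (forall x, In x l -> P1 x) -> length l <= a) ->
  (forall l, NoDup l -> (forall x, In x l -> P2 x) -> length l <= b) ->
  forall l, NoDup l -> (forall x, In x l -> P1 x \/ P2 x) -> length l <= a + b.
Proof.
  intros P1 P2 a b H1 H2 l Hl Hx.
  rewrite <- (filter_length (fun x => decb (P1 x)) l).
  assert (A1 : length (filter (fun x => decb (P1 x)) l) <= a).
  { apply H1. apply NoDup_filter; auto. intros x Hin. apply filter_In in Hin. apply decb_true. tauto. }
  assert (A2 : length (filter (fun x => negb (decb (P1 x))) l) <= b).
  { apply H2. apply NoDup_filter; auto. intros x Hin. apply filter_In in Hin. destruct Hin as [Hin Hn].
    destruct (Hx x Hin); auto. apply decb_true in H. rewrite H in Hn. discriminate. }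
  lia.
Qed.

Lemma bad_bound : forall (P : nat -> list V) (Bd : V -> Prop) c,
  (forall i j, i <> j -> forall v, In v (P i) -> ~ In v (P j)) ->
  (forall l, NoDup l -> (forall x, In x l -> Bd x) -> length l <= c) ->
  exists B, forall i, B <= i -> forall v, In v (P i) -> ~ Bd v.
Proof.
  intros P Bd c HP Hc. apply NNPP. intro Hn.
  assert (K : forall k, exists l B', NoDup l /\ length l = k /\ (forall x, In x l -> Bd x) /\
               (forall x, In x l -> exists i, i < B' /\ In x (P i))).
  { induction k as [|k IH].
    - exists [], 0. repeat split; auto; try constructor; intros x [].
    - destruct IH as [l [B' [H1 [H2 [H3 H4]]]]].
      assert (Hb : exists i v, B' <= i /\ In v (P i) /\ Bd v).
      { apply NNPP. intro Hb. apply Hn. exists B'. intros i Hi v Hv Hbd. apply Hb. exists i, v; auto. }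
      destruct Hb as [i [v [Hi [Hv Hbd]]]].
      exists (v :: l), (S i). repeat split.
      + constructor; auto. intro Hin. destruct (H4 v Hin) as [j [Hj Hvj]].
        apply (HP j i) with v; auto. lia.
      + simpl; lia.
      + intros x [Hx|Hx]; subst; auto.
      + intros x [Hx|Hx]. subst. exists i; split; auto. destruct (H4 x Hx) as [j [Hj Hj']]. exists j; split; auto; lia. }
  destruct (K (S c)) as [l [B' [H1 [H2 [H3 _]]]]].
  specialize (Hc l H1 H3). lia.
Qed.

Lemma list_bound : forall (P : nat -> list V),
  (forall i j, i <> j -> forall v, In v (P i) -> ~ In v (P j)) ->
  forall cl, exists B, forall i c, In c cl -> In c (P i) -> i < B.
Proof.
  intros P HP cl. induction cl as [|c cl IH].
  - exists 0. intros i c [].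
  - destruct IH as [B1 H1]. destruct (disj_bound P HP c) as [B2 H2]. exists (B1 + B2).
    intros i c' [E|E] Hc. subst. apply H2 in Hc. lia. apply (H1 i c') in Hc; auto. lia.
Qed.

Lemma pigeon_mono : forall (l : list V) (Q : V -> nat -> Prop),
  (forall w n m, m <= n -> Q w n -> Q w m) -> (forall n, exists w, In w l /\ Q w n) ->
  exists w, In w l /\ forall n, Q w n.
Proof.
  intros l Q Hm H. apply NNPP. intro Hn.
  assert (K : forall l', incl l' l -> exists N, forall w, In w l' -> ~ Q w N).
  { induction l' as [|a l' IH]; intros Hi.
    - exists 0. intros w [].
    - destruct IH as [N1 HN1]. intros x Hx; apply Hi; right; auto.
      assert (Ha : exists n, ~ Q a n).
      { apply NNPP. intro Ha. apply Hn. exists a. split. apply Hi; left; auto.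
        intros n. apply NNPP. intro Hq. apply Ha. exists n; auto. }
      destruct Ha as [n Hn'].
      exists (N1 + n). intros w [Hw|Hw].
      + subst. intro Hq. apply Hn'. apply (Hm w (N1 + n)); auto; lia.
      + intro Hq. apply (HN1 w Hw). apply (Hm w (N1 + n)); auto; lia. }
  destruct (K l (incl_refl l)) as [N HN]. destruct (H N) as [w [Hw Hq]]. apply (HN w Hw Hq).
Qed.

Definition suffixes (L : list V) : list (list V) := map (fun k => skipn k L) (seq 0 (S (length L))).

Lemma suffixes_in : forall L1 L2, In L2 (suffixes (L1 ++ L2)).
Proof.
  intros L1 L2. unfold suffixes. apply in_map_iff. exists (length L1). split.
  - rewrite skipn_app. rewrite skipn_all, Nat.sub_diag. reflexivity.
  - apply in_seq. rewrite length_app. lia.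
Qed.

Definition infixes (L : list V) : list (list V) :=
  flat_map (fun i => suffixes (firstn i L)) (seq 0 (S (length L))).

Lemma infixes_in : forall L1 L2 L3, In L2 (infixes (L1 ++ L2 ++ L3)).
Proof.
  intros L1 L2 L3. unfold infixes. apply in_flat_map. exists (length (L1 ++ L2)). split.
  - apply in_seq. rewrite !length_app. lia.
  - rewrite app_assoc. rewrite firstn_app, firstn_all, Nat.sub_diag. simpl. rewrite app_nil_r.
    apply suffixes_in.
Qed.

Lemma walk_snoc_inv : forall (G : digraph V) x l z y, walk G x (l ++ [z]) y ->
  z = y /\ exists z', walk G x l z' /\ edge G z' z.
Proof.
  intros G x l. revert x. induction l as [|a l IH]; intros x z y H; simpl in H.
  - apply walk_inv in H. destruct H as [He [Hv Hw]]. destruct Hw as [_ [_ Hl]]. simpl in Hl. split; auto.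
    exists x. split; auto. apply walk_nil; auto.
  - apply walk_inv in H. destruct H as [He [Hv Hw]]. destruct (IH _ _ _ Hw) as [E [z' [Hw' He']]].
    split; auto. exists z'. split; auto. apply walk_cons; auto.
Qed.

End Count.


Section Konig.
Variable V : Type.
Variable E : V -> V -> Prop.
Variable N : V -> Prop.
Variable nb : V -> list V.
Variable roots : list V.
Variable x0 : V.
Hypothesis Hnb : forall v w, N v -> N w -> E v w -> In w (nb v).
Definition D := Digraph N E.

Fixpoint ball n := match n with 0 => roots | S n' => ball n' ++ flat_map nb (ball n') end.

Lemma ball_mono : forall m n, m <= n -> incl (ball m) (ball n).
Proof.
  intros m n H. induction H. apply incl_refl. simpl. apply incl_appl. auto.
Qed.

Lemma walk_ball : forall l x y, In x roots -> walk D x l y -> In y (ball (length l)).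
Proof.
  induction l as [|z l IH] using rev_ind; intros x y Hx Hw.
  - destruct Hw as [_ [_ Hl]]. simpl in Hl. subst. exact Hx.
  - pose proof (walk_vert_end Hw) as Hy.
    apply walk_snoc_inv in Hw. destruct Hw as [Ez [z' [Hw He]]]. subst z.
    rewrite length_app. simpl. replace (length l + 1) with (S (length l)) by lia. simpl.
    apply in_or_app. right. apply in_flat_map. exists z'. split. eapply IH; eauto.
    apply Hnb; auto. exact (walk_vert_end Hw).
Qed.

Lemma path_walk0 : forall x l, is_path D (x :: l) -> walk D x l (last (x :: l) x).
Proof. intros x l [_ [_ [Hf Hc]]]. split; auto. Qed.

Hypothesis Hinf : forall l : list V, exists v, ~ In v l /\ exists x, In x roots /\ exists lw, walk D x lw v.

Lemma long_paths : forall n, exists x, In x roots /\ exists l, is_path D (x :: l) /\ n <= length l.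
Proof.
  intros n. destruct (Hinf (ball n)) as [v [Hv [x [Hx [lw Hw]]]]].
  destruct (walk_to_path Hw) as [l [Hp [Hl _]]].
  exists x. split; auto. exists l. split; auto.
  destruct (Nat.le_gt_cases n (length l)) as [H|H]; auto. exfalso. apply Hv.
  apply (@ball_mono (length l) n); [lia|]. rewrite <- Hl. apply (walk_ball Hx). apply path_walk0; auto.
Qed.

Definition Good (p : list V) := forall n, exists e, is_path D (p ++ e) /\ n <= length e.

Lemma good_root : exists x, In x roots /\ Good [x].
Proof.
  apply (@pigeon_mono V roots (fun x n => exists e, is_path D ([x] ++ e) /\ n <= length e)).
  - intros w n m Hmn [e [He Hl]]. exists e. split; auto. lia.
  - intros n. destruct (long_paths n) as [x [Hx [l [Hp Hl]]]]. exists x. split; auto. exists l. auto.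
Qed.

Lemma chain_last : forall (R : V -> V -> Prop) p w e d, p <> [] -> chain R (p ++ w :: e) -> R (last p d) w.
Proof.
  intros R p w e d. induction p as [|a p IH]; intros Hp Hc; [congruence|].
  destruct p as [|b p].
  - simpl in Hc. simpl. tauto.
  - rewrite last_cons2. apply IH. discriminate. simpl in Hc. simpl. tauto.
Qed.

Lemma path_prefix : forall p e, p <> [] -> is_path D (p ++ e) -> is_path D p.
Proof.
  intros p e Hp [_ [Hnd [Hf Hc]]]. split; auto. split; [|split].
  - eapply NoDup_app_remove_r; eauto.
  - apply Forall_app in Hf; tauto.
  - clear Hnd Hf Hp. induction p as [|a p IH]. simpl; auto. destruct p as [|b p']. simpl; auto.
    simpl in Hc |- *. destruct Hc as [H1 H2]. split; auto. apply IH. exact H2.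
Qed.

Lemma good_step : forall p, p <> [] -> Good p -> exists w, Good (p ++ [w]).
Proof.
  intros p Hp Hg.
  destruct (@pigeon_mono V (nb (last p x0))
     (fun w n => exists e, is_path D ((p ++ [w]) ++ e) /\ n <= length e)) as [w [_ Hw]].
  - intros w n m Hmn [e [He Hl]]. exists e. split; auto. lia.
  - intros n. destruct (Hg (S n)) as [e [He Hl]]. destruct e as [|w e]; simpl in Hl; [lia|].
    exists w. split.
    + destruct He as [_ [_ [Hf Hc]]]. apply Hnb.
      * rewrite Forall_forall in Hf. apply Hf. apply in_or_app. left.
        destruct p; [congruence|]. apply last_in.
      * rewrite Forall_forall in Hf. apply Hf. apply in_or_app. right. left; auto.
      * eapply chain_last; eauto.
    + exists e. rewrite <- app_assoc. simpl. split; auto. lia.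
  - exists w. intros n. apply Hw.
Qed.

Definition nextp (p : list V) : list V :=
  match excluded_middle_informative (exists w, Good (p ++ [w])) with
  | left H => p ++ [proj1_sig (constructive_indefinite_description _ H)]
  | right _ => p
  end.

Fixpoint pseq n := match n with 0 => [x0] | S n' => nextp (pseq n') end.

Hypothesis Hx0 : Good [x0].

Lemma pseq_spec : forall n, pseq n <> [] /\ Good (pseq n) /\ exists w, pseq (S n) = pseq n ++ [w].
Proof.
  induction n as [|n IH].
  - split; [discriminate|split; auto]. simpl. unfold nextp.
    destruct (excluded_middle_informative _) as [H|H].
    + eexists; reflexivity.
    + exfalso. apply H. apply good_step; auto. discriminate.
  - destruct IH as [H1 [H2 [w H3]]].
    assert (Hg : Good (pseq (S n))).
    { simpl. unfold nextp. destruct (excluded_middle_informative _) as [H|H].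
      - destruct (constructive_indefinite_description _ H). simpl. auto.
      - exfalso. apply H. apply good_step; auto. }
    split; [rewrite H3; destruct (pseq n); [congruence|discriminate]|split; auto].
    change (pseq (S (S n))) with (nextp (pseq (S n))). unfold nextp.
    destruct (excluded_middle_informative _) as [H|H].
    + eexists; reflexivity.
    + exfalso. apply H. apply good_step; auto. rewrite H3. destruct (pseq n); [congruence|discriminate].
Qed.

Definition kr n := last (pseq n) x0.

Lemma pseq_S : forall n, pseq (S n) = pseq n ++ [kr (S n)].
Proof.
  intros n. destruct (pseq_spec n) as [_ [_ [w Hw]]]. unfold kr. rewrite Hw. rewrite last_last. reflexivity.
Qed.

Lemma kr_in : forall n m, m <= n -> In (kr m) (pseq n).
Proof.
  intros n m H. induction H.
  - unfold kr. destruct (pseq_spec m) as [H1 _]. destruct (pseq m); [congruence|]. apply last_in.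
  - rewrite pseq_S. apply in_or_app. left. auto.
Qed.

Lemma pseq_path : forall n, is_path D (pseq n).
Proof.
  intros n. destruct (pseq_spec n) as [H1 [H2 _]]. destruct (H2 0) as [e [He _]].
  eapply path_prefix; eauto.
Qed.

Lemma kr_new : forall n, ~ In (kr (S n)) (pseq n).
Proof.
  intros n. destruct (pseq_path (S n)) as [_ [Hnd _]]. rewrite pseq_S in Hnd.
  intro H. apply NoDup_remove_2 in Hnd. apply Hnd. rewrite app_nil_r. auto.
Qed.

Lemma konig : exists r : nat -> V, (forall n, N (r n)) /\ (forall i j, r i = r j -> i = j) /\
  forall n, E (r n) (r (S n)).
Proof.
  exists kr. split; [|split].
  - intros n. destruct (pseq_path n) as [_ [_ [Hf _]]]. rewrite Forall_forall in Hf. apply Hf. apply kr_in; auto.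
  - assert (K : forall i j, i < j -> kr i <> kr j).
    { intros i j Hij Heq. destruct j as [|j]; [lia|]. apply (kr_new j). rewrite <- Heq. apply kr_in. lia. }
    intros i j Hij. destruct (Nat.lt_trichotomy i j) as [H|[H|H]]; auto.
    + exfalso; eapply K; eauto.
    + exfalso; eapply K; eauto.
  - intros n. destruct (pseq_path (S n)) as [_ [_ [_ Hc]]]. rewrite pseq_S in Hc.
    destruct (pseq_spec n) as [H1 _].
    pose proof (@chain_last (edge D) (pseq n) (kr (S n)) [] x0 H1 Hc) as Hl. exact Hl.
Qed.
End Konig.

Lemma konig_main : forall (V : Type) (E : V -> V -> Prop) (N : V -> Prop) (nb : V -> list V) (roots : list V),
  (forall v w, N v -> N w -> E v w -> In w (nb v)) ->
  (forall l : list V, exists v, ~ In v l /\ exists x, In x roots /\ exists lw, walk (Digraph N E) x lw v) ->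
  exists r : nat -> V, (forall n, N (r n)) /\ (forall i j, r i = r j -> i = j) /\ forall n, E (r n) (r (S n)).
Proof.
  intros V E N nb roots Hnb Hinf.
  destruct (@good_root V E N nb roots Hnb Hinf) as [x0 [_ Hx0]].
  exact (@konig V E N nb x0 Hnb Hx0).
Qed.


Section Semi.
Variable V : Type.
Variable op : V -> V -> V.
Hypothesis assoc : forall x y z, op x (op y z) = op (op x y) z.
Variable A : V -> Prop.
Variable Al : list V.
Hypothesis HAl : forall x, A x -> In x Al.
Variable s : V.
Definition T := gen op A.
Definition U := gen op (fun x => T x \/ x = s).
Definition F x := U x /\ ~ T x.
Variable Fl : list V.
Hypothesis HFl : forall x, F x -> In x Fl.
Definition G1 := cayley_r op T A.
Definition G2 := cayley_r op U (fun x => A x \/ x = s).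

Lemma T_op : forall x y, T x -> T y -> T (op x y).
Proof. intros; apply gen_op; auto. Qed.
Lemma T_U : forall x, T x -> U x.
Proof. intros x H. apply gen_base. auto. Qed.
Lemma U_op : forall x y, U x -> U y -> U (op x y).
Proof. intros; apply gen_op; auto. Qed.
Lemma A_T : forall x, A x -> T x.
Proof. intros; apply gen_base; auto. Qed.
Lemma s_U : U s.
Proof. apply gen_base; auto. Qed.
Lemma gen_U : forall g, A g \/ g = s -> U g.
Proof. intros g [H|H]. apply T_U, A_T; auto. subst; apply s_U. Qed.

Lemma edge2_inv : forall x y, edge G2 x y -> U x /\ exists g, (A g \/ g = s) /\ y = op x g.
Proof. intros x y H. exact H. Qed.

Lemma edge1_mk : forall x a, T x -> A a -> edge G1 x (op x a).
Proof. intros x a H1 H2. split; auto. exists a; auto. Qed.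

Lemma G12v : forall x, vert G1 x -> vert G2 x.
Proof. intros x H. apply T_U; auto. Qed.
Lemma G12e : forall x y, edge G1 x y -> edge G2 x y.
Proof. intros x y [H1 [a [H2 H3]]]. split. apply T_U; auto. exists a; auto. Qed.

Lemma word_ex : forall x, T x -> exists L, L <> [] /\ Forall A L /\ forall y, fold_left op L y = op y x.
Proof.
  intros x H. induction H as [x Hx|x1 x2 H1 [L1 [N1 [F1 E1]]] H2 [L2 [N2 [F2 E2]]]].
  - exists [x]. split; [discriminate|split; auto]. 
  - exists (L1 ++ L2). split; [destruct L1; [congruence|discriminate]|split].
    + apply Forall_app; auto.
    + intros y. rewrite fold_left_app, E1, E2. symmetry; apply assoc.
Qed.

Fixpoint wf (y : V) (L : list V) : list V :=
  match L with [] => [] | a :: L' => op y a :: wf (op y a) L' end.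

Lemma wf_walk : forall L y, T y -> Forall A L -> walk G1 y (wf y L) (fold_left op L y).
Proof.
  induction L as [|a L IH]; intros y Hy HL; simpl.
  - apply walk_nil. exact Hy.
  - inversion HL; subst. apply walk_cons; auto. apply edge1_mk; auto. apply IH; auto. apply T_op; auto. apply A_T; auto.
Qed.

Lemma wf_in : forall L y v, In v (y :: wf y L) -> exists L1 L2, L = L1 ++ L2 /\ v = fold_left op L1 y.
Proof.
  induction L as [|a L IH]; intros y v H; simpl in H.
  - destruct H as [H|[]]. exists [], []. auto.
  - destruct H as [H|H].
    + exists [], (a :: L). auto.
    + destruct (IH _ _ H) as [L1 [L2 [E1 E2]]]. exists (a :: L1), L2. subst. auto.
Qed.

Definition V0l : list V := s :: flat_map (fun g => map (op g) (s :: Fl)) (s :: Al).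

Definition wordf (v : V) : list V :=
  match excluded_middle_informative (T v) with
  | left H => proj1_sig (constructive_indefinite_description _ (word_ex H))
  | right _ => []
  end.

Definition WL : list (list V) := map wordf V0l.

Lemma WL_A : forall L, In L WL -> Forall A L.
Proof.
  intros L H. unfold WL in H. apply in_map_iff in H. destruct H as [v [Hv _]]. subst.
  unfold wordf. destruct (excluded_middle_informative (T v)) as [H|H].
  - destruct (constructive_indefinite_description _ (word_ex H)) as [L [HL0 [HL HL1]]]. simpl; auto.
  - constructor.
Qed.

Lemma WL_of : forall v, T v -> In v V0l -> exists L, In L WL /\ forall y, fold_left op L y = op y v.
Proof.
  intros v Hv Hin. exists (wordf v). split.
  - apply in_map; auto.
  - unfold wordf. destruct (excluded_middle_informative (T v)) as [H|H]; [|tauto].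
    destruct (constructive_indefinite_description _ (word_ex H)) as [L [HL0 [HL1 HL]]]. simpl; auto.
Qed.

Definition Shadow (t y : V) := exists L, In L WL /\ t = fold_left op L y.

Lemma shadow_base : forall y, Shadow (op y s) y \/ exists f, F f /\ op y s = op y f.
Proof.
  intros y. destruct (classic (T s)) as [H|H].
  - left. destruct (WL_of H) as [L [HL E]]. left; auto. exists L. split; auto.
  - right. exists s. split; auto. split; auto. apply s_U.
Qed.

Lemma shadow_step : forall t y f y' g, F f -> t = op y f -> y = op y' g -> (A g \/ g = s) ->
  Shadow t y' \/ exists f', F f' /\ t = op y' f'.
Proof.
  intros t y f y' g Hf Ht Hy Hg. subst. rewrite <- assoc.
  assert (HU : U (op g f)) by (apply U_op; [apply gen_U; auto|apply Hf]).
  destruct (classic (T (op g f))) as [H|H].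
  - left. destruct (WL_of (v := op g f) H) as [L [HL E]].
    + unfold V0l. right. apply in_flat_map. exists g. split.
      * destruct Hg as [Hg|Hg]; [right; apply HAl; auto|left; auto].
      * apply in_map. right. apply HFl; auto.
    + exists L. split; auto.
  - right. exists (op g f). split; auto. split; auto.
Qed.


Definition Bad (r : nat -> V) v := (exists f, F f /\ v = op (r 0) f) \/
   (exists M0, forall M, M0 <= M -> exists f, F f /\ v = op (r M) f).

Lemma kind2_common : forall (r : nat -> V) l,
  (forall x, In x l -> exists M0, forall M, M0 <= M -> exists f, F f /\ x = op (r M) f) ->
  exists M, forall x, In x l -> exists f, F f /\ x = op (r M) f.
Proof.
  intros r l K.
  assert (IH' : forall l', incl l' l -> exists M2, forall M, M2 <= M -> forall x, In x l' ->
                exists f, F f /\ x = op (r M) f).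
  { induction l' as [|b l' IHl]; intros Hi.
    - exists 0. intros M _ x [].
    - destruct IHl as [M2 H2]. intros y Hy; apply Hi; right; auto.
      destruct (K b (Hi b (or_introl eq_refl))) as [M3 H3].
      exists (M2 + M3). intros M HM x [Hx|Hx]. subst. apply H3; lia. apply H2; auto; lia. }
  destruct (IH' l (incl_refl l)) as [M2 H2].
  exists M2. intros x Hx. apply H2; auto.
Qed.

Lemma F_count : forall l, NoDup l -> (forall x, In x l -> F x) -> length l <= length Fl.
Proof. intros l Hl H. apply NoDup_incl_length; auto. intros x Hx. apply HFl; auto. Qed.

Lemma bad_count : forall r l, NoDup l -> (forall x, In x l -> F x \/ Bad r x) ->
  length l <= length Fl + (length Fl + length Fl).
Proof.
  intros r. apply count_split. apply F_count.
  apply count_split.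
  - intros l Hl H. apply (NoDup_incl_length (l' := map (op (r 0)) Fl)) in Hl. rewrite length_map in Hl. exact Hl.
    intros x Hx. destruct (H x Hx) as [f [Hf E]]. subst. apply in_map. apply HFl; auto.
  - intros l Hl H. destruct (kind2_common r l H) as [M HM].
    apply (NoDup_incl_length (l' := map (op (r M)) Fl)) in Hl. rewrite length_map in Hl. exact Hl.
    intros x Hx. destruct (HM x Hx) as [f [Hf E]]. subst. apply in_map. apply HFl; auto.
Qed.

Lemma walk_end_in : forall (G : digraph V) x l y, walk G x l y -> In y (x :: l).
Proof. intros G x l y H. rewrite <- (walk_last H y). apply last_in. Qed.

Lemma back_walk : forall l' z0 z', walk G2 z0 l' z' -> forall t f, F f -> t = op z' f ->
  (exists y, In y (z0 :: l') /\ Shadow t y) \/ (exists f', F f' /\ t = op z0 f').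
Proof.
  induction l' as [|z l IH] using rev_ind; intros z0 z' Hw t f Hf Ht.
  - destruct Hw as [_ [_ Hl]]. simpl in Hl. subst. right. exists f; auto.
  - apply walk_snoc_inv in Hw. destruct Hw as [E [z'' [Hw He]]]. subst z.
    destruct (edge2_inv He) as [_ [g [Hg Eg]]].
    destruct (shadow_step Hf Ht Eg Hg) as [Hs|[f' [Hf' Ht']]].
    + left. exists z''. split; auto. apply walk_end_in in Hw. destruct Hw; [left; auto|right; apply in_or_app; left; auto].
    + destruct (IH _ _ Hw t f' Hf' Ht') as [[y [Hy Hs]]|H].
      * left. exists y. split; auto. destruct Hy; [left; auto|right; apply in_or_app; left; auto].
      * right; auto.
Qed.

Lemma edge1_inv : forall x y, edge G1 x y -> T x /\ exists a, A a /\ y = op x a.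
Proof. intros x y H; exact H. Qed.

Lemma ray_back : forall r, is_ray G1 r -> forall t d m f, d <= m -> F f -> t = op (r m) f ->
  (exists k, Shadow t (r k)) \/ exists f', F f' /\ t = op (r (m - d)) f'.
Proof.
  intros r [_ [_ Hr]] t d. induction d as [|d IH]; intros m f Hd Hf Ht.
  - right. exists f. rewrite Nat.sub_0_r. auto.
  - destruct (IH m f ltac:(lia) Hf Ht) as [H|[f' [Hf' Ht']]]; [left; auto|].
    destruct (edge1_inv (Hr (m - S d))) as [_ [a [Ha Ea]]].
    replace (S (m - S d)) with (m - d) in Ea by lia.
    destruct (shadow_step Hf' Ht' Ea (or_introl Ha)) as [Hs|Hs].
    + left. eauto.
    + right. exact Hs.
Qed.

Lemma anti_back : forall r, is_antiray G1 r -> forall t d m f, F f -> t = op (r m) f ->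
  (exists k, Shadow t (r k)) \/ exists f', F f' /\ t = op (r (m + d)) f'.
Proof.
  intros r [_ [_ Hr]] t d. induction d as [|d IH]; intros m f Hf Ht.
  - right. exists f. rewrite Nat.add_0_r. auto.
  - destruct (IH m f Hf Ht) as [H|[f' [Hf' Ht']]]; [left; auto|].
    destruct (edge1_inv (Hr (m + d))) as [_ [a [Ha Ea]]].
    destruct (shadow_step Hf' Ht' Ea (or_introl Ha)) as [Hs|Hs].
    + left. eauto.
    + right. replace (m + S d) with (S (m + d)) by lia. exact Hs.
Qed.

Lemma r_back : forall r, ray_or_antiray G1 r -> forall t m f, F f -> t = op (r m) f ->
  (exists k, Shadow t (r k)) \/ Bad r t.
Proof.
  intros r [Hr|Hr] t m f Hf Ht.
  - destruct (ray_back Hr (d := m) (le_n m) Hf Ht) as [H|H]; [left; auto|].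
    right. left. rewrite Nat.sub_diag in H. exact H.
  - destruct (classic (exists k, Shadow t (r k))) as [H|H]; [left; auto|].
    right. right. exists m. intros M HM.
    destruct (@anti_back r Hr t (M - m) m f Hf Ht) as [H'|H']; [tauto|].
    replace (m + (M - m)) with M in H' by lia. exact H'.
Qed.

Definition Sufs := flat_map (@suffixes V) WL.
Definition Ctrl (P : list V) v := In v P \/ exists suf, In suf Sufs /\ In (fold_left op suf v) P.

Lemma Ctrl_mono : forall P P' v, incl P P' -> Ctrl P v -> Ctrl P' v.
Proof. intros P P' v Hi [H|[suf [H1 H2]]]; [left; auto|right; exists suf; auto]. Qed.

Lemma wf_ctrl : forall L y t P, In L WL -> t = fold_left op L y -> In t P ->
  forall v, In v (y :: wf y L) -> Ctrl P v.
Proof.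
  intros L y t P HL Ht HtP v Hv. destruct (wf_in L Hv) as [L1 [L2 [E1 E2]]].
  right. exists L2. split.
  - unfold Sufs. apply in_flat_map. exists L. split; auto. subst. apply suffixes_in.
  - subst. rewrite fold_left_app in HtP. exact HtP.
Qed.

Definition GoodW (r : nat -> V) (P : list V) (w : V) :=
  exists x lw, walk G1 x lw w /\ vset r x /\ forall v, In v (x :: lw) -> Ctrl P v.

Lemma extend_shadow : forall r P y L t, GoodW r P y -> T y -> In L WL -> t = fold_left op L y -> In t P ->
  GoodW r P t.
Proof.
  intros r P y L t [x [lw [Hw [Hx Hc]]]] Hy HL Ht HtP.
  exists x, (lw ++ wf y L). split; [|split; auto].
  - eapply walk_app; eauto. rewrite Ht. apply wf_walk; auto. apply WL_A; auto.
  - intros v Hv. destruct Hv as [Hv|Hv]. apply Hc; left; auto.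
    apply in_app_or in Hv. destruct Hv as [Hv|Hv]. apply Hc; right; auto.
    eapply wf_ctrl; eauto. right; auto.
Qed.

Lemma direct_shadow : forall r P k L t, T (r k) -> In L WL -> t = fold_left op L (r k) -> In t P ->
  GoodW r P t.
Proof.
  intros r P k L t Hy HL Ht HtP. exists (r k), (wf (r k) L). split; [|split].
  - rewrite Ht. apply wf_walk; auto. apply WL_A; auto.
  - exists k; auto.
  - intros v Hv. eapply wf_ctrl; eauto.
Qed.

Lemma path_shadow : forall r, ray_or_antiray G1 r -> forall l z0 z, walk G2 z0 l z -> vset r z0 ->
  (forall v, In v (z0 :: l) -> T v /\ ~ Bad r v) ->
  forall w, In w (z0 :: l) -> GoodW r (z0 :: l) w.
Proof.
  intros r Hr. induction l as [|z' l IH] using rev_ind; intros z0 z Hw Hz0 Hgood w Hin.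
  - destruct Hin as [Hin|[]]. subst. exists w, []. split; [|split; auto].
    + apply walk_nil. apply Hgood. left; auto.
    + intros v [Hv|[]]. left. subst; left; auto.
  - apply walk_snoc_inv in Hw. destruct Hw as [E [z'' [Hw He]]]. subst z'.
    assert (Hincl : incl (z0 :: l) (z0 :: l ++ [z])).
    { intros v [Hv|Hv]; [left; auto|right; apply in_or_app; left; auto]. }
    assert (IH' : forall w, In w (z0 :: l) -> GoodW r (z0 :: l ++ [z]) w).
    { intros w' Hw'. assert (Hg : forall v, In v (z0 :: l) -> T v /\ ~ Bad r v) by (intros; apply Hgood; auto).
      destruct (IH z0 z'' Hw Hz0 Hg w' Hw') as [x [lw [A1 [A2 A3]]]].
      exists x, lw. split; auto. split; auto. intros v Hv. eapply Ctrl_mono; eauto. }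
    assert (HzP : In z (z0 :: l ++ [z])) by (right; apply in_or_app; right; left; auto).
    destruct Hin as [Hin|Hin]; [apply IH'; left; auto|].
    apply in_app_or in Hin. destruct Hin as [Hin|[Hin|[]]]; [apply IH'; right; auto|subst w].
    assert (Hz'' : In z'' (z0 :: l)) by (eapply walk_end_in; eauto).
    assert (Tz'' : T z'') by (apply Hgood; apply Hincl; auto).
    destruct (edge2_inv He) as [_ [g [Hg Eg]]].
    destruct (classic (A g)) as [Ha|Ha].
    + destruct (IH' z'' Hz'') as [x [lw [A1 [A2 A3]]]].
      exists x, (lw ++ [z]). split; [|split; auto].
      * eapply walk_snoc; eauto. subst. apply edge1_mk; auto. subst. apply T_op; auto. apply A_T; auto.
      * intros v Hv. destruct Hv as [Hv|Hv]. apply A3; left; auto.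
        apply in_app_or in Hv. destruct Hv as [Hv|[Hv|[]]]. apply A3; right; auto. subst. left; auto.
    + destruct Hg as [Hg|Hg]; [tauto|subst g].
      destruct (shadow_base z'') as [[L [HL Ht]]|[f [Hf Ht]]].
      * eapply extend_shadow; eauto. congruence.
      * destruct (back_walk Hw (t := z) Hf (eq_trans Eg Ht)) as [[y [Hy [L [HL Ht']]]]|[f' [Hf' Ht']]].
        -- eapply extend_shadow; eauto. apply Hgood; apply Hincl; auto.
        -- destruct Hz0 as [m Hm]. rewrite <- Hm in Ht'.
           destruct (@r_back r Hr z m f' Hf' Ht') as [[k [L [HL Hk]]]|Hb].
           ++ eapply direct_shadow; eauto; destruct Hr as [[Hv _]|[Hv _]]; apply Hv.
           ++ exfalso. exact (proj2 (Hgood z HzP) Hb).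
Qed.

Lemma dirII : forall r (Y : V -> Prop), ray_or_antiray G1 r -> reach_le G2 (vset r) Y -> reach_le G1 (vset r) Y.
Proof.
  intros r Y Hr [P [HP HPd]].
  destruct (@bad_bound V P (fun v => F v \/ Bad r v) _ HPd (@bad_count r)) as [B HB].
  apply (@family_reach2 V G1 (vset r) Y (fun v n => exists i, n <= i /\ Ctrl (P i) v)).
  - intros v. destruct (list_bound P HPd (v :: map (fun suf => fold_left op suf v) Sufs)) as [B' HB'].
    exists B'. intros n [i [Hi Hc]]. destruct Hc as [Hc|[suf [Hs Hc]]].
    + specialize (HB' i v (or_introl eq_refl) Hc). lia.
    + assert (In (fold_left op suf v) (v :: map (fun suf => fold_left op suf v) Sufs)).
      { right. apply in_map_iff. exists suf; auto. }
      specialize (HB' i _ H Hc). lia.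
  - intros n. destruct (HP (n + B)) as [Hp [[x [Hx1 Hx2]] [z [Hz1 Hz2]]]].
    destruct (path_walk Hp Hx1 Hz1) as [l [Hl Hw]].
    assert (Hg : forall v, In v (x :: l) -> T v /\ ~ Bad r v).
    { intros v Hv. assert (Hu : U v) by (apply (walk_vert Hw); auto).
      rewrite <- Hl in Hv. pose proof (HB (n + B) ltac:(lia) v Hv) as Hnb.
      split; [|tauto]. apply NNPP. intro Ht. apply Hnb. left. split; auto. }
    destruct (path_shadow Hr Hw Hx2 Hg (walk_end_in Hw)) as [x' [lw [W1 [W2 W3]]]].
    exists x', lw, z. split; auto. split; auto. split; auto.
    intros v Hv. exists (n + B). split; [lia|]. rewrite Hl. auto.
Qed.

Lemma walk_mono_g : forall (Ga Gb : digraph V) x l y,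
  (forall v, vert Ga v -> vert Gb v) -> (forall u v, edge Ga u v -> edge Gb u v) ->
  walk Ga x l y -> walk Gb x l y.
Proof.
  intros Ga Gb x l y Hv He [Hc [Hf Hl]]. split; [|split; auto].
  - eapply chain_mono; [|exact Hc]. auto.
  - eapply Forall_impl; [|exact Hf]. auto.
Qed.

Lemma walk12 : forall x l y, walk G1 x l y -> walk G2 x l y.
Proof. intros. eapply walk_mono_g; [apply G12v|apply G12e|auto]. Qed.

Lemma fold_T : forall L y, T y -> Forall A L -> T (fold_left op L y).
Proof.
  induction L as [|a L IH]; intros y Hy HL; simpl; auto. inversion HL; subst.
  apply IH; auto. apply T_op; auto. apply A_T; auto.
Qed.

Definition Infs := flat_map (@infixes V) WL.

Section NStruct.
Variable q : nat -> V.
Hypothesis Hq_inj : forall i j, q i = q j -> i = j.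
Hypothesis HqT : forall k, T (q k).
Variable src : nat -> nat -> Prop.

Definition ShOK (j : nat) (p : nat * list V) := src j (fst p) /\ In (snd p) WL /\ q j = fold_left op (snd p) (q (fst p)).

Definition shf (j : nat) : nat * list V :=
  match excluded_middle_informative (exists p, ShOK j p) with
  | left H => proj1_sig (constructive_indefinite_description _ H)
  | right _ => (0, [])
  end.

Lemma shf_spec : forall j, (exists p, ShOK j p) -> ShOK j (shf j).
Proof.
  intros j H. unfold shf. destruct (excluded_middle_informative _) as [H'|H']; [|tauto].
  destruct (constructive_indefinite_description _ H'). simpl. auto.
Qed.

Definition NN (v : V) := (exists k, q k = v) \/
  (exists j L1 L2, ShOK j (shf j) /\ snd (shf j) = L1 ++ L2 /\ v = fold_left op L1 (q (fst (shf j)))).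

Lemma NN_T : forall v, NN v -> T v.
Proof.
  intros v [[k Hk]|[j [L1 [L2 [[_ [HL _]] [E Ev]]]]]].
  - subst; auto.
  - subst. apply fold_T; auto. apply WL_A in HL. rewrite E in HL. apply Forall_app in HL. tauto.
Qed.

Definition SegList (j : nat) : list V :=
  map (fun i => fold_left op (firstn i (snd (shf j))) (q (fst (shf j)))) (seq 0 (S (length (snd (shf j))))).

Lemma SegList_in : forall j L1 L2, snd (shf j) = L1 ++ L2 -> In (fold_left op L1 (q (fst (shf j)))) (SegList j).
Proof.
  intros j L1 L2 E. unfold SegList. apply in_map_iff. exists (length L1). split.
  - rewrite E. rewrite firstn_app, firstn_all, Nat.sub_diag. simpl. rewrite app_nil_r. auto.
  - apply in_seq. rewrite E, length_app. lia.
Qed.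

Lemma N_equiv : forall r : nat -> V, (forall i j, r i = r j -> i = j) -> (forall n, NN (r n)) ->
  end_equiv G2 r q.
Proof.
  intros r Hr HN. split.
  - apply (@family_reach2 V G2 (vset r) (vset q) (fun v n => r n = v \/
       exists j L1 L2a L2b, ShOK j (shf j) /\ snd (shf j) = L1 ++ L2a ++ L2b /\
         r n = fold_left op L1 (q (fst (shf j))) /\ v = fold_left op L2a (r n))).
    + intros v. destruct (inj_bound r Hr v) as [B1 H1].
      destruct (inj_list_bound q Hq_inj (map (fun suf => fold_left op suf v) Sufs)) as [Bj HBj].
      destruct (inj_list_bound r Hr (flat_map SegList (seq 0 Bj))) as [Bn HBn].
      exists (B1 + Bn). intros n [Hn|[j [L1 [L2a [L2b [[Hs [HL Hq]] [E [Er Ev]]]]]]]].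
      * apply H1 in Hn; lia.
      * assert (Hj : j < Bj).
        { apply HBj. apply in_map_iff. exists L2b. split.
          - rewrite Hq, E, !fold_left_app, <- Er, <- Ev. reflexivity.
          - unfold Sufs. apply in_flat_map. exists (snd (shf j)). split; auto. rewrite E, app_assoc. apply suffixes_in. }
        assert (Hn : n < Bn).
        { apply HBn. apply in_flat_map. exists j. split. apply in_seq; lia.
          rewrite Er. apply (SegList_in j L1 (L2a ++ L2b)). auto. }
        lia.
    + intros n. destruct (HN n) as [[k Hk]|[j [L1 [L2 [[Hs [HL Hq]] [E Ev]]]]]].
      * exists (r n), [], (r n). split. apply walk_nil. apply G12v. apply NN_T. apply HN.
        split. exists n; auto. split. exists k; auto. intros v [Hv|[]]. left; auto.
      * exists (r n), (wf (r n) L2), (q j). split; [|split; [exists n; auto|split; [exists j; auto|]]].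
        -- apply walk12. rewrite Hq, E, fold_left_app, <- Ev. apply wf_walk.
           apply NN_T, HN. apply WL_A in HL. rewrite E in HL. apply Forall_app in HL. tauto.
        -- intros v Hv. destruct (wf_in L2 Hv) as [L2a [L2b [E2 Ev2]]]. right.
           exists j, L1, L2a, L2b. split; [split; auto|split; [rewrite E, E2; auto|split; auto]].
  - apply (@family_reach2 V G2 (vset q) (vset r) (fun v n => r n = v \/
       exists j L1a L1b L2, ShOK j (shf j) /\ snd (shf j) = L1a ++ L1b ++ L2 /\
         r n = fold_left op (L1a ++ L1b) (q (fst (shf j))) /\ v = fold_left op L1a (q (fst (shf j))))).
    + intros v. destruct (inj_bound r Hr v) as [B1 H1].
      destruct (inj_list_bound r Hr (map (fun inf => fold_left op inf v) Infs)) as [Bn HBn].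
      exists (B1 + Bn). intros n [Hn|[j [L1a [L1b [L2 [[Hs [HL Hq]] [E [Er Ev]]]]]]]].
      * apply H1 in Hn; lia.
      * assert (n < Bn); [|lia]. apply HBn. apply in_map_iff. exists L1b. split.
        -- rewrite Er, fold_left_app, <- Ev. reflexivity.
        -- unfold Infs. apply in_flat_map. exists (snd (shf j)). split; auto. rewrite E. apply infixes_in.
    + intros n. destruct (HN n) as [[k Hk]|[j [L1 [L2 [[Hs [HL Hq]] [E Ev]]]]]].
      * exists (r n), [], (r n). split. apply walk_nil. apply G12v. apply NN_T. apply HN.
        split. exists k; auto. split. exists n; auto. intros v [Hv|[]]. left; auto.
      * exists (q (fst (shf j))), (wf (q (fst (shf j))) L1), (r n).
        split; [|split; [exists (fst (shf j)); auto|split; [exists n; auto|]]].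
        -- apply walk12. rewrite Ev. apply wf_walk. auto.
           apply WL_A in HL. rewrite E in HL. apply Forall_app in HL. tauto.
        -- intros v Hv. destruct (wf_in L1 Hv) as [L1a [L1b [E1 Ev1]]]. right.
           exists j, L1a, L1b, L2. split; [split; auto|split; [rewrite E, E1, app_assoc; auto|split; auto]].
           rewrite Ev, E1. auto.
Qed.

End NStruct.

Lemma seq_back_fwd : forall y : nat -> V, (forall i, exists g, (A g \/ g = s) /\ y (S i) = op (y i) g) ->
  forall t d m f, d <= m -> F f -> t = op (y m) f ->
  (exists k, k <= m /\ Shadow t (y k)) \/ exists f', F f' /\ t = op (y (m - d)) f'.
Proof.
  intros y Hy t d. induction d as [|d IH]; intros m f Hd Hf Ht.
  - right. exists f. rewrite Nat.sub_0_r. auto.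
  - destruct (IH m f ltac:(lia) Hf Ht) as [H|[f' [Hf' Ht']]]; [left; auto|].
    destruct (Hy (m - S d)) as [g [Hg Eg]].
    replace (S (m - S d)) with (m - d) in Eg by lia.
    destruct (shadow_step Hf' Ht' Eg Hg) as [Hs|Hs].
    + left. exists (m - S d). split; auto. lia.
    + right. exact Hs.
Qed.

Lemma seq_back_bwd : forall y : nat -> V, (forall i, exists g, (A g \/ g = s) /\ y i = op (y (S i)) g) ->
  forall t d m f, F f -> t = op (y m) f ->
  (exists k, m <= k /\ Shadow t (y k)) \/ exists f', F f' /\ t = op (y (m + d)) f'.
Proof.
  intros y Hy t d. induction d as [|d IH]; intros m f Hf Ht.
  - right. exists f. rewrite Nat.add_0_r. auto.
  - destruct (IH m f Hf Ht) as [H|[f' [Hf' Ht']]]; [left; auto|].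
    destruct (Hy (m + d)) as [g [Hg Eg]].
    destruct (shadow_step Hf' Ht' Eg Hg) as [Hs|Hs].
    + left. exists (S (m + d)). split; auto. lia.
    + right. replace (m + S d) with (S (m + d)) by lia. exact Hs.
Qed.

Lemma walk_restrict : forall (N : V -> Prop) x l y, walk G1 x l y -> (forall v, In v (x :: l) -> N v) ->
  walk (Digraph N (edge G1)) x l y.
Proof.
  intros N x l y [Hc [Hf Hl]] HN. split; [exact Hc|split; auto]. rewrite Forall_forall. auto.
Qed.

Lemma surj_ray : forall q, is_ray G2 q -> (forall k, T (q k)) -> exists r, ray_or_antiray G1 r /\ end_equiv G2 r q.
Proof.
  intros q [Hqv [Hqi Hqe]] HqT.
  set (src := fun j k' : nat => k' < j).
  destruct (inj_list_bound q Hqi (map (op (q 0)) Fl)) as [J HJ].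
  assert (Key : forall k, J <= S k -> (exists a, A a /\ q (S k) = op (q k) a) \/ ShOK q src (S k) (shf q src (S k))).
  { intros k Hk. destruct (edge2_inv (Hqe k)) as [_ [g [Hg Eg]]].
    destruct (classic (A g)) as [Ha|Ha]; [left; eauto|]. right. apply shf_spec.
    destruct Hg as [Hg|Hg]; [tauto|subst g].
    destruct (shadow_base (q k)) as [[L [HL Ht]]|[f [Hf Ht]]].
    - exists (k, L). unfold ShOK, src. simpl. split; [lia|split; [exact HL|congruence]].
    - assert (Hy : forall i, exists g, (A g \/ g = s) /\ q (S i) = op (q i) g).
      { intros i. destruct (edge2_inv (Hqe i)) as [_ H]. exact H. }
      destruct (@seq_back_fwd q Hy (q (S k)) k k f (le_n k) Hf (eq_trans Eg Ht)) as [[k' [Hk' [L [HL Ht']]]]|[f' [Hf' Ht']]].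
      + exists (k', L). unfold ShOK, src. simpl. split; [lia|split; [exact HL|exact Ht']].
      + exfalso. rewrite Nat.sub_diag in Ht'. assert (S k < J); [|lia]. apply HJ. rewrite Ht'. apply in_map. apply HFl; auto. }
  set (N := NN q src).
  assert (HNq : forall k, N (q k)) by (intros k; left; eauto).
  assert (Hseg : forall j, ShOK q src j (shf q src j) -> forall v, In v (q (fst (shf q src j)) :: wf (q (fst (shf q src j))) (snd (shf q src j))) -> N v).
  { intros j Hj v Hv. destruct (wf_in _ Hv) as [L1 [L2 [E Ev]]]. right. exists j, L1, L2. auto. }
  assert (Reach : forall n k, k <= n -> exists x, In x (map q (seq 0 (S J))) /\ exists lw, walk (Digraph N (edge G1)) x lw (q k)).
  { induction n as [|n IH]; intros k Hk.
    - exists (q k). split. apply in_map. apply in_seq. lia. exists []. apply walk_nil. apply HNq.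
    - destruct (Nat.le_gt_cases k J) as [HkJ|HkJ].
      + exists (q k). split. apply in_map. apply in_seq. lia. exists []. apply walk_nil. apply HNq.
      + destruct k as [|k0]; [lia|]. destruct (Key k0 ltac:(lia)) as [[a [Ha Ea]]|Hs].
        * destruct (IH k0 ltac:(lia)) as [x [Hx [lw Hw]]]. exists x. split; auto. exists (lw ++ [q (S k0)]).
          eapply walk_snoc; eauto. simpl. rewrite Ea. apply edge1_mk; auto. apply HNq.
        * destruct Hs as [Hsrc [HL Hq]].
          assert (Hlt : fst (shf q src (S k0)) < S k0) by exact Hsrc.
          destruct (IH (fst (shf q src (S k0))) ltac:(lia)) as [x [Hx [lw Hw]]].
          exists x. split; auto. exists (lw ++ wf (q (fst (shf q src (S k0)))) (snd (shf q src (S k0)))).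
          eapply walk_app; eauto. rewrite Hq. apply walk_restrict.
          -- apply wf_walk. auto. apply WL_A; auto.
          -- apply Hseg. split; auto. }
  destruct (@konig_main V (edge G1) N (fun v => map (op v) Al) (map q (seq 0 (S J)))) as [r [HrN [Hri Hre]]].
  - intros v w _ _ He. destruct (edge1_inv He) as [_ [a [Ha Ea]]]. subst. apply in_map. auto.
  - intros l. destruct (inj_list_bound q Hqi l) as [B HB]. exists (q B). split.
    + intro H. apply HB in H. lia.
    + apply (Reach B B). lia.
  - exists r. split.
    + left. split; [|split; auto]. intros n. apply (NN_T HqT (HrN n)).
    + apply (N_equiv Hqi HqT r Hri HrN).
Qed.

Lemma surj_anti : forall q, is_antiray G2 q -> (forall k, T (q k)) -> exists r, ray_or_antiray G1 r /\ end_equiv G2 r q.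
Proof.
  intros q [Hqv [Hqi Hqe]] HqT.
  set (src := fun j k' : nat => j < k').
  assert (Hdisj : forall i j, i <> j -> forall v, In v [q i] -> ~ In v [q j]).
  { intros i j Hij v [H1|[]] [H2|[]]. subst. apply Hij. apply Hqi. auto. }
  destruct (@bad_bound V (fun k => [q k]) (fun v => F v \/ Bad q v) _ Hdisj (@bad_count q)) as [J HJ].
  assert (Hy : forall i, exists g, (A g \/ g = s) /\ q i = op (q (S i)) g).
  { intros i. destruct (edge2_inv (Hqe i)) as [_ H]. exact H. }
  assert (Key : forall k, J <= k -> (exists a, A a /\ q k = op (q (S k)) a) \/ ShOK q src k (shf q src k)).
  { intros k Hk. destruct (edge2_inv (Hqe k)) as [_ [g [Hg Eg]]].
    destruct (classic (A g)) as [Ha|Ha]; [left; eauto|]. right. apply shf_spec.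
    destruct Hg as [Hg|Hg]; [tauto|subst g].
    destruct (shadow_base (q (S k))) as [[L [HL Ht]]|[f [Hf Ht]]].
    - exists (S k, L). unfold ShOK, src. simpl. split; [lia|split; [exact HL|congruence]].
    - destruct (classic (exists k', S k <= k' /\ Shadow (q k) (q k'))) as [[k' [Hk' [L [HL Ht']]]]|Hn].
      + exists (k', L). unfold ShOK, src. simpl. split; [lia|split; [exact HL|exact Ht']].
      + exfalso. apply (HJ k Hk (q k) (or_introl eq_refl)). right. right. exists (S k). intros M HM.
        destruct (@seq_back_bwd q Hy (q k) (M - S k) (S k) f Hf (eq_trans Eg Ht)) as [H|H]; [tauto|].
        replace (S k + (M - S k)) with M in H by lia. exact H. }
  set (N := NN q src).
  assert (HNq : forall k, N (q k)) by (intros k; left; eauto).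
  set (Dg := fun u v => edge G1 u v /\ ((exists k, J <= k /\ u = q (S k) /\ v = q k) \/
      (exists j L1 a L2, ShOK q src j (shf q src j) /\ snd (shf q src j) = L1 ++ a :: L2 /\
          u = fold_left op L1 (q (fst (shf q src j))) /\ v = op u a))).
  assert (Hin : forall v, exists lv, forall u, Dg u v -> In u lv).
  { intros v. destruct (inj_bound q Hqi v) as [B1 H1].
    destruct (inj_list_bound q Hqi (map (fun suf => fold_left op suf v) Sufs)) as [Bj HBj].
    exists (map (fun k => q (S k)) (seq 0 B1) ++ flat_map (SegList q src) (seq 0 Bj)).
    intros u [_ [[k [_ [Eu Ev]]]|[j [L1 [a [L2 [[Hs [HL Hq]] [E [Eu Ev]]]]]]]]].
    - apply in_or_app. left. apply in_map_iff. exists k. split; auto. apply in_seq. symmetry in Ev. apply H1 in Ev. lia.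
    - apply in_or_app. right. apply in_flat_map. exists j. split.
      + apply in_seq. split; [lia|]. apply HBj. apply in_map_iff. exists L2. split.
        * rewrite Hq, E. rewrite fold_left_app. simpl. rewrite <- Eu, <- Ev. reflexivity.
        * unfold Sufs. apply in_flat_map. exists (snd (shf q src j)). split; auto. rewrite E.
          replace (L1 ++ a :: L2) with ((L1 ++ [a]) ++ L2) by (rewrite <- app_assoc; auto). apply suffixes_in.
      + rewrite Eu. apply (SegList_in q src j L1 (a :: L2)). auto. }
  set (nb := fun v => proj1_sig (constructive_indefinite_description _ (Hin v))).
  assert (Hnb : forall v w, N v -> N w -> Dg w v -> In w (nb v)).
  { intros v w _ _ H. unfold nb. destruct (constructive_indefinite_description _ (Hin v)). simpl. auto. }
  set (E := fun x y => Dg y x).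
  assert (Segw : forall j, ShOK q src j (shf q src j) -> forall L1 L2, snd (shf q src j) = L1 ++ L2 ->
     exists lw, walk (Digraph N E) (fold_left op L1 (q (fst (shf q src j)))) lw (q (fst (shf q src j)))).
  { intros j Hj. destruct Hj as [Hsrc [HL Hq]]. intros L1. induction L1 as [|a L1 IH] using rev_ind; intros L2 EL.
    - exists []. apply walk_nil. apply HNq.
    - destruct (IH (a :: L2)) as [lw Hw]. rewrite EL, <- app_assoc. reflexivity.
      exists (fold_left op L1 (q (fst (shf q src j))) :: lw). apply walk_cons; auto.
      + unfold E, Dg. split.
        * rewrite fold_left_app. simpl. apply edge1_mk.
          -- apply fold_T; auto. apply WL_A in HL. rewrite EL in HL. apply Forall_app in HL. destruct HL as [HL _].
             apply Forall_app in HL. tauto.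
          -- apply WL_A in HL. rewrite EL in HL. apply Forall_app in HL. destruct HL as [HL _].
             apply Forall_app in HL. destruct HL as [_ HL]. inversion HL; auto.
        * right. exists j, L1, a, L2. split; [split; auto|split; [rewrite EL, <- app_assoc; auto|split; auto]].
          rewrite fold_left_app. reflexivity.
      + right. exists j, (L1 ++ [a]), L2. split; [split; auto|split; auto]. }
  assert (Reach : forall B, exists k, B <= k /\ J <= k /\ exists lw, walk (Digraph N E) (q J) lw (q k)).
  { induction B as [|B IH].
    - exists J. split; [lia|split; auto]. exists []. apply walk_nil. apply HNq.
    - destruct IH as [k [HBk [HJk [lw Hw]]]].
      destruct (Nat.le_gt_cases (S B) k) as [H|H]; [exists k; split; auto; split; auto; exists lw; auto|].
      destruct (Key k HJk) as [[a [Ha Ea]]|Hs].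
      + exists (S k). split; [lia|split; [lia|]]. exists (lw ++ [q (S k)]). eapply walk_snoc; eauto.
        * unfold E, Dg. simpl. split. rewrite Ea. apply edge1_mk; auto. left. exists k. auto.
        * apply HNq.
      + pose proof Hs as [Hsrc [HL Hq]].
        assert (Hlt : k < fst (shf q src k)) by exact Hsrc.
        destruct (Segw k Hs (snd (shf q src k)) [] (eq_sym (app_nil_r _))) as [lw2 Hw2].
        exists (fst (shf q src k)). split; [lia|split; [lia|]]. exists (lw ++ lw2).
        eapply walk_app; eauto. rewrite Hq. exact Hw2. }
  destruct (@konig_main V E N nb [q J]) as [r [HrN [Hri Hre]]].
  - intros v w Hv Hw He. apply Hnb; auto.
  - intros l. destruct (inj_list_bound q Hqi l) as [B HB]. destruct (Reach B) as [k [Hk [_ [lw Hw]]]].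
    exists (q k). split.
    + intro H. apply HB in H. lia.
    + exists (q J). split; [left; auto|]. exists lw; auto.
  - exists r. split.
    + right. split; [|split; auto]. intros n. apply (NN_T HqT (HrN n)). intros n. apply (Hre n).
    + apply (N_equiv Hqi HqT r Hri HrN).
Qed.

Lemma surj : forall q, ray_or_antiray G2 q -> exists r, ray_or_antiray G1 r /\ end_equiv G2 r q.
Proof.
  intros q Hq.
  destruct (inj_list_bound q (roa_inj Hq) Fl) as [K0 HK0].
  set (q' := fun k => q (k + K0)).
  assert (Hq'T : forall k, T (q' k)).
  { intros k. assert (Hu : U (q' k)) by (apply (roa_vert Hq)). apply NNPP. intro Ht.
    assert (k + K0 < K0); [|lia]. apply HK0. apply HFl. split; auto. }
  assert (Hq' : ray_or_antiray G2 q').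
  { destruct Hq as [[A1 [A2 A3]]|[A1 [A2 A3]]]; [left|right]; unfold q';
      (split; [intros i; apply A1|split; [intros i j H; apply A2 in H; lia| intros i; apply A3]]). }
  assert (E' : end_equiv G2 q' q).
  { assert (R : forall X Y : V -> Prop, (forall k, X (q' k)) -> (forall k, Y (q' k)) -> reach_le G2 X Y).
    { intros X Y HX HY. apply (reach_refl_inj G2 X Y q' (roa_inj Hq')). intros n. split; [apply (roa_vert Hq')|split; auto]. }
    split; apply R; intros k; [exists k|exists (k + K0)|exists (k + K0)|exists k]; reflexivity. }
  destruct Hq' as [Hr|Ha].
  - destruct (surj_ray Hr Hq'T) as [r [Hr1 Hr2]]. exists r. split; auto.
    apply (equiv_trans (or_introl Hr) Hr2 E').
  - destruct (surj_anti Ha Hq'T) as [r [Hr1 Hr2]]. exists r. split; auto.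
    apply (equiv_trans (or_intror Ha) Hr2 E').
Qed.

Lemma main_iso : ends_iso G1 G2.
Proof.
  apply (assemble (G1 := G1) (G2 := G2)).
  - apply G12v.
  - apply G12e.
  - intros r r' Hr _ H. apply dirII; auto.
  - apply surj.
Qed.
End Semi.


Theorem mainTheorem5 (S : Type) (op : S -> S -> S)
  (op_assoc : forall x y z, op x (op y z) = op (op x y) z)
  (A : S -> Prop) (A_fin : finite_set A) (s : S) :
  let T := gen op A in
  let Ts := gen op (fun x => T x \/ x = s) in
  finite_set (fun x => Ts x /\ ~ T x) ->
  ends_iso (cayley_r op T A) (cayley_r op Ts (fun x => A x \/ x = s)).
Proof.
  intros T Ts HF.
  destruct A_fin as [Al HAl].
  destruct HF as [Fl HFl].
  exact (@main_iso S op op_assoc A Al HAl s Fl HFl).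
Qed.
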